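(* Let $\mathfrak A=(S_\Omega,S_{\mathcal E},\Omega,\mathcal E,B,u)$ be an accessible GPT fragment with $d_\Omega=\dim S_\Omega$ and $d_{\mathcal E}=\dim S_{\mathcal E}$. If $\mathfrak A$ admits a simplicial-cone embedding, then it admits a simplicial-cone embedding $(\Lambda,\tau_\Omega,\tau_{\mathcal E})$ with $|\Lambda|\le d_\Omega d_{\mathcal E}$. If moreover for every $e\in\mathcal E$ there exists $e^\perp\in\mathcal E$ with $e+e^\perp=u$, then $\mathfrak A$ admits a simplex embedding with at most $d_\Omega d_{\mathcal E}$ ontic states; in particular, when $S_\Omega=S_{\mathcal E}$ has dimension $d$, at most $d^2$ ontic states.
   Context: An accessible GPT fragment $\mathfrak A=(S_\Omega,S_{\mathcal E},\Omega,\mathcal E,B,u)$ consists of: finite-dimensional real vector spaces $S_\Omega$ and $S_{\mathcal E}$; a set $\Omega\subset S_\Omega$ of states which spans $S_\Omega$; a set $\mathcal E\subset S_{\mathcal E}^*$ of effects which spans $S_{\mathcal E}^*$; a bilinear form $B:S_{\mathcal E}^*\times S_\Omega\to\mathbb R$ (the probability rule); and a unit effect $u\in\mathcal E$. The convex hulls of $\Omega$ and $\mathcal E$ have finitely many extreme points. A simplicial-cone embedding of $\mathfrak A$ is a finite set $\Lambda$ (the ontic states) together with linear maps $\tau_\Omega:S_\Omega\to\mathbb R^\Lambda$ and $\tau_{\mathcal E}:S_{\mathcal E}^*\to\mathbb R^\Lambda$ such that $\tau_\Omega(s)$ is entrywise nonnegative for all $s\in\Omega$, $\tau_{\mathcal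 E}(e)$ is entrywise nonnegative for all $e\in\mathcal E$, and $B(w,v)=\tau_{\mathcal E}(w)\cdot\tau_\Omega(v)$ for all $w\in S_{\mathcal E}^*$, $v\in S_\Omega$. A simplex embedding is a simplicial-cone embedding which additionally satisfies $\tau_{\mathcal E}(u)=(1,1,\dots,1)$. *)

(* Defs.v *)
From HB Require Import structures.
From mathcomp Require Import all_boot all_order all_algebra.
From mathcomp Require Import reals.
Set Implicit Arguments. Unset Strict Implicit. Unset Printing Implicit Defensive.
Import Order.TTheory GRing.Theory Num.Theory.
Local Open Scope ring_scope.

Section GPT.
Variable R : realType.

Definition spans (V : vectType R) (A : V -> Prop) : Prop :=
  forall v : V, exists s : seq V, (forall x, x \in s -> A x) /\ (v \in <<s>>%VS).

Definition conv (V : vectType R) (A : V -> Prop) (x : V) : Prop :=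
  exists (k : nat) (p : 'I_k -> V) (t : 'I_k -> R),
    (forall i, A (p i)) /\ (forall i, 0 <= t i) /\ (\sum_i t i = 1) /\
    x = \sum_i t i *: p i.

Definition extreme_point (V : vectType R) (C : V -> Prop) (x : V) : Prop :=
  C x /\ forall (y z : V) (t : R), C y -> C z -> 0 < t -> t < 1 ->
    x = t *: y + (1 - t) *: z -> y = x /\ z = x.

Definition finitely_many_extreme_points (V : vectType R) (A : V -> Prop) : Prop :=
  exists s : seq V, forall x, extreme_point (conv A) x -> x \in s.

(* An accessible GPT fragment (S_Om, S_E, Om, E, B, u).  The type W plays the
   role of the dual space S_E^* (in which effects live); dim W = dim S_E. *)
Definition accessible_GPT_fragment (V W : vectType R)
    (Om : V -> Prop) (Ef : W -> Prop) (B : W -> V -> R) (u : W) : Prop :=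
  [/\ spans Om, spans Ef, Ef u,
      finitely_many_extreme_points Om &
      finitely_many_extreme_points Ef] /\
  ((forall (a : R) (w1 w2 : W) (v : V), B (a *: w1 + w2) v = a * B w1 v + B w2 v) /\
      (forall (a : R) (w : W) (v1 v2 : V), B w (a *: v1 + v2) = a * B w v1 + B w v2)).

(* simplicial-cone embedding with ontic state space Lambda = 'I_n,
   R^Lambda represented as row vectors 'rV[R]_n. *)
Definition simplicial_cone_embedding (V W : vectType R)
    (Om : V -> Prop) (Ef : W -> Prop) (B : W -> V -> R) (n : nat)
    (tO : {linear V -> 'rV[R]_n}) (tE : {linear W -> 'rV[R]_n}) : Prop :=
  [/\ (forall s, Om s -> forall i, 0 <= tO s 0 i),
      (forall e, Ef e -> forall i, 0 <= tE e 0 i) &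
      (forall (w : W) (v : V), B w v = \sum_(i < n) tE w 0 i * tO v 0 i)].

Definition simplex_embedding (V W : vectType R)
    (Om : V -> Prop) (Ef : W -> Prop) (B : W -> V -> R) (u : W) (n : nat)
    (tO : {linear V -> 'rV[R]_n}) (tE : {linear W -> 'rV[R]_n}) : Prop :=
  simplicial_cone_embedding Om Ef B tO tE /\ tE u = const_mx 1.

End GPT.

(* Main.v *)
From HB Require Import structures.
From mathcomp Require Import all_boot all_order all_algebra.
From mathcomp Require Import reals.
Require Import Defs.
From mathcomp Require Import ring.
From Stdlib Require Import Classical.
Import Order.TTheory GRing.Theory Num.Theory.
Local Open Scope ring_scope.

Lemma sum_sel (R : pzSemiRingType) n (F : 'I_n -> R) (a : 'I_n) :
  \sum_i F i * (i == a)%:R = F a.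
Proof.
rewrite (bigD1 a) //= eqxx mulr1 big1 ?addr0 // => i /negPf ->; by rewrite mulr0.
Qed.

Lemma dep (R : realType) n N (A : 'M[R]_(n,N)) (S : {set 'I_n}) :
  (N < #|S|)%N -> exists mu : 'rV[R]_n, mu *m A = 0 /\
    (forall i, i \notin S -> mu 0 i = 0) /\ exists i, mu 0 i != 0.
Proof.
move=> hN.
pose P : 'M[R]_(#|S|, n) := \matrix_(j, i) (i == enum_val j)%:R.
have nf : ~~ row_free (P *m A).
  rewrite /row_free; apply/negP => /eqP h.
  have := rank_leq_col (P *m A); rewrite h => h2.
  by move: (leq_ltn_trans h2 hN); rewrite ltnn.
have : kermx (P *m A) != 0 by rewrite kermx_eq0.
move=> hK.
have [j0 [b0 hb0]] : exists j b, kermx (P *m A) j b != 0.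
  apply: NNPP => hn; move/eqP: hK; apply; apply/matrixP => j b.
  apply: NNPP => hjb; apply: hn; exists j, b; apply/eqP => e; apply: hjb.
  by rewrite e mxE.
pose y := row j0 (kermx (P *m A)).
have hy : y *m (P *m A) = 0 by rewrite /y -row_mul mulmx_ker row0.
exists (y *m P); split; first by rewrite -mulmxA.
have ev : forall i, (y *m P) 0 i = \sum_j y 0 j * (i == enum_val j)%:R.
  move=> i; rewrite !mxE; apply: eq_bigr => j _; rewrite !mxE //.
split.
  move=> i hi; rewrite ev big1 // => j _.
  case: eqP => [e|]; last by rewrite mulr0.
  by move: hi; rewrite e (enum_valP j).
exists (enum_val b0); rewrite ev.
rewrite (eq_bigr (fun j => y 0 j * (j == b0)%:R)); last first.
  move=> j _; congr (_ * _%:R).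
  by rewrite (inj_eq enum_val_inj) eq_sym.
by rewrite sum_sel /y mxE.
Qed.

Lemma carath (R : realType) n N (A : 'M[R]_(n,N)) (c : 'rV[R]_n) :
  (forall i, 0 <= c 0 i) ->
  exists c' : 'rV[R]_n, [/\ forall i, 0 <= c' 0 i, c' *m A = c *m A,
     leq #|[set i | c' 0 i != 0]| N & forall i, c' 0 i != 0 -> c 0 i != 0].
Proof.
move: {2}#|_| (leqnn #|[set i | c 0 i != 0]|) => m; elim: m c => [|m IH] c hm hc.
  exists c; split => //; apply: leq_trans hm _; exact: leq0n.
case: (leqP #|[set i | c 0 i != 0]| N) => hN; first by exists c.
have [mu [hmu1 [hmu2 [i0 hi0]]]] := @dep R n N A _ hN.
have [nu [h1 [h2 [i1 hi1]]]] : exists nu : 'rV_n, nu *m A = 0 /\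
    (forall i, i \notin [set i | c 0 i != 0] -> nu 0 i = 0) /\ exists i, 0 < nu 0 i.
  case: (boolP (0 < mu 0 i0)) => hp; first by exists mu; split => //; split => //; exists i0.
  exists (- mu); split; first by rewrite mulNmx hmu1 oppr0.
  split; first by move=> i hi; rewrite mxE hmu2 // oppr0.
  exists i0; rewrite mxE oppr_gt0 lt_neqAle hi0 /= leNgt //.
pose F i := c 0 i / nu 0 i.
case: (@arg_minP _ R _ i1 (fun i => 0 < nu 0 i) F hi1) => i2 hi2 hmin.
pose c2 := c - F i2 *: nu.
have hF : 0 <= F i2 by rewrite /F divr_ge0 // ltW.
have hc2 : forall i, 0 <= c2 0 i.
  move=> i; rewrite !mxE subr_ge0.
  case: (boolP (0 < nu 0 i)) => hi.
    have := hmin i hi; rewrite /F ler_pdivlMr // => h; apply: le_trans h _.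
  move: hi; rewrite -leNgt => hi.
  by apply: le_trans (hc i); rewrite mulr_ge0_le0.
have sub2 : forall i, c2 0 i != 0 -> c 0 i != 0.
  move=> i; apply: contra => /eqP ci; rewrite !mxE ci (h2 i) ?mulr0 ?subr0 //.
  by rewrite inE ci eqxx.
have zero2 : c2 0 i2 = 0.
  by rewrite !mxE /F -mulrA mulVf ?mulr1 ?subrr // gt_eqF.
have hlt : leq #|[set i | c2 0 i != 0]|.+1 #|[set i | c 0 i != 0]|.
  apply: proper_card; apply/properP; split.
    by apply/subsetP => i; rewrite !inE; exact: sub2.
  exists i2; rewrite !inE ?zero2 ?eqxx //.
  apply/negP => /eqP ci; move: hi2; rewrite (h2 i2) ?ltxx //.
  by rewrite inE ci eqxx.
have [c' [hc'1 hc'2 hc'3 hc'4]] := IH c2 (leq_trans (ltnSE (leq_trans hlt hm)) (leqnn _)) hc2.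
exists c'; split => //.
  by rewrite hc'2 /c2 mulmxBl -scalemxAl h1 scaler0 subr0.
by move=> i /hc'4; exact: sub2.
Qed.

Section Red.
Variable R : realType.
Variables V W : vectType R.
Variable n : nat.
Variable tE : {linear W -> 'rV[R]_n}.
Variable tO : {linear V -> 'rV[R]_n}.

Let dV := \dim (fullv : {vspace V}).
Let dW := \dim (fullv : {vspace W}).
Let bV := vbasis (fullv : {vspace V}).
Let bW := vbasis (fullv : {vspace W}).

Definition Mat (i : 'I_n) : 'M[R]_(dW, dV) :=
  \matrix_(a, b) (tE bW`_a 0 i * tO bV`_b 0 i).
Definition Amat : 'M[R]_(n, dW * dV) := \matrix_i mxvec (Mat i).

Lemma tEexp w i : tE w 0 i = \sum_a coord bW a w * tE bW`_a 0 i.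
Proof.
rewrite [in LHS](coord_vbasis (memvf w)) linear_sum summxE.
by apply: eq_bigr => a _; rewrite linearZ mxE.
Qed.

Lemma tOexp v i : tO v 0 i = \sum_b coord bV b v * tO bV`_b 0 i.
Proof.
rewrite [in LHS](coord_vbasis (memvf v)) linear_sum summxE.
by apply: eq_bigr => a _; rewrite linearZ mxE.
Qed.

Lemma expand (c : 'rV[R]_n) w v :
  \sum_i c 0 i * (tE w 0 i * tO v 0 i) =
  \sum_a \sum_b coord bW a w * coord bV b v * (\sum_i c 0 i * Mat i a b).
Proof.
rewrite (eq_bigr (fun i => \sum_a \sum_b coord bW a w * coord bV b v *
    (c 0 i * Mat i a b))); last first.
  move=> i _; rewrite tEexp tOexp big_distrl big_distrr /=.
  apply: eq_bigr => a _; rewrite big_distrr big_distrr /=.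
  apply: eq_bigr => b _; rewrite /Mat mxE; ring.
rewrite exchange_big; apply: eq_bigr => a _.
rewrite exchange_big; apply: eq_bigr => b _.
by rewrite big_distrr.
Qed.

Lemma cA (c c' : 'rV[R]_n) : c' *m Amat = c *m Amat -> forall w v,
  \sum_i c' 0 i * (tE w 0 i * tO v 0 i) = \sum_i c 0 i * (tE w 0 i * tO v 0 i).
Proof.
move=> h w v.
have h2 : \sum_i c' 0 i *: Mat i = \sum_i c 0 i *: Mat i.
  apply: (can_inj mxvecK); rewrite !linear_sum.
  rewrite (eq_bigr (fun i => c' 0 i *: row i Amat)); last first.
    by move=> i _; rewrite linearZ /Amat rowK.
  rewrite [RHS](eq_bigr (fun i => c 0 i *: row i Amat)); last first.
    by move=> i _; rewrite linearZ /Amat rowK.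
  by rewrite -!mulmx_sum_row.
rewrite !expand; apply: eq_bigr => a _; apply: eq_bigr => b _.
congr (_ * _).
have := congr1 (fun M : 'M[R]_(dW, dV) => M a b) h2.
rewrite /= !summxE => h3.
move: h3; rewrite (eq_bigr (fun k => c' 0 k * Mat k a b)); last by move=> k _; rewrite mxE.
by rewrite [in X in _ = X -> _](eq_bigr (fun k => c 0 k * Mat k a b)) //; move=> k _; rewrite mxE.
Qed.

Lemma reduce (Om : V -> Prop) (Ef : W -> Prop) (B : W -> V -> R)
  (c : 'rV[R]_n) (s : 'I_n -> R) :
  (forall i, 0 <= c 0 i) -> (forall i, 0 < s i) ->
  (forall x, Om x -> forall i, 0 <= tO x 0 i) ->
  (forall e, Ef e -> forall i, 0 <= tE e 0 i) ->
  (forall w v, B w v = \sum_i c 0 i * (tE w 0 i * tO v 0 i)) ->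
  exists k (tO' : {linear V -> 'rV[R]_k}) (tE' : {linear W -> 'rV[R]_k}),
    [/\ simplicial_cone_embedding Om Ef B tO' tE',
        (k <= dV * dW)%N &
        forall j : 'I_k, exists i, c 0 i != 0 /\ forall w, tE' w 0 j = tE w 0 i / s i].
Proof.
move=> hc hs hO hE hB.
have [c' [hc'1 hc'2 hc'3 hc'4]] := @carath R n _ Amat c hc.
set S := [set i | c' 0 i != 0] in hc'3.
pose P : 'M[R]_(n, #|S|) := \matrix_(i, j) ((i == enum_val j)%:R / s i).
pose Q : 'M[R]_(n, #|S|) := \matrix_(i, j) ((i == enum_val j)%:R * (c' 0 i * s i)).
have eP : forall (x : 'rV[R]_n) j, (x *m P) 0 j = x 0 (enum_val j) / s (enum_val j).
  move=> x j; rewrite mxE (eq_bigr (fun i => (x 0 i / s i) * (i == enum_val j)%:R)) ?sum_sel //.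
  by move=> i _; rewrite mxE; ring.
have eQ : forall (x : 'rV[R]_n) j,
    (x *m Q) 0 j = x 0 (enum_val j) * (c' 0 (enum_val j) * s (enum_val j)).
  move=> x j; rewrite mxE (eq_bigr (fun i => (x 0 i * (c' 0 i * s i)) * (i == enum_val j)%:R)) ?sum_sel //.
  by move=> i _; rewrite mxE; ring.
exists #|S|, (mulmxr Q \o tO), (mulmxr P \o tE); split.
- split.
  + move=> x hx j; rewrite /= eQ; apply: mulr_ge0; first exact: hO.
    by apply: mulr_ge0 => //; apply: ltW.
  + move=> e he j; rewrite /= eP; apply: divr_ge0; first exact: hE.
    exact: ltW.
  + move=> w v; rewrite hB -(cA _ _ hc'2).
    rewrite (eq_bigr (fun j => c' 0 (enum_val j) * (tE w 0 (enum_val j) * tO v 0 (enum_val j))));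
      last first.
      move=> j _; rewrite /= eP eQ.
      have := hs (enum_val j); move: (s _) => t ht.
      by field; rewrite gt_eqF.
    rewrite -(big_enum_val (fun i => c' 0 i * (tE w 0 i * tO v 0 i))).
    rewrite [LHS](bigID (mem S)) /= [X in _ + X = _]big1 ?addr0 //.
    by move=> i; rewrite inE negbK => /eqP ->; rewrite mul0r.
- by rewrite mulnC.
- move=> j; exists (enum_val j); split.
    by apply: hc'4; have := enum_valP j; rewrite inE.
  by move=> w; rewrite /= eP.
Qed.
End Red.

Theorem mainTheorem5 (R : realType) (V W : vectType R)
    (Om : V -> Prop) (Ef : W -> Prop) (B : W -> V -> R) (u : W) :
  accessible_GPT_fragment Om Ef B u ->
  (exists (n : nat) (tO : {linear V -> 'rV[R]_n}) (tE : {linear W -> 'rV[R]_n}),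
      simplicial_cone_embedding Om Ef B tO tE) ->
  (exists (n : nat) (tO : {linear V -> 'rV[R]_n}) (tE : {linear W -> 'rV[R]_n}),
      simplicial_cone_embedding Om Ef B tO tE /\
      (n <= \dim (fullv : {vspace V}) * \dim (fullv : {vspace W}))%N) /\
  ((forall e, Ef e -> exists ep, Ef ep /\ e + ep = u) ->
   exists (n : nat) (tO : {linear V -> 'rV[R]_n}) (tE : {linear W -> 'rV[R]_n}),
      simplex_embedding Om Ef B u tO tE /\
      (n <= \dim (fullv : {vspace V}) * \dim (fullv : {vspace W}))%N).
Proof.
move=> [[hsO hsE hEu _ _] _] [n [tO [tE [hO hE hB]]]].
split.
  have h1 : forall i, 0 <= (const_mx 1 : 'rV[R]_n) 0 i by move=> i; rewrite mxE ler01.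
  have h2 : forall w v, B w v = \sum_i (const_mx 1 : 'rV[R]_n) 0 i * (tE w 0 i * tO v 0 i).
    by move=> w v; rewrite hB; apply: eq_bigr => i _; rewrite mxE mul1r.
  have [k [tO' [tE' [emb hk _]]]] :=
    @reduce R V W n tE tO Om Ef B (const_mx 1) (fun _ => 1) h1 (fun _ => ltr01) hO hE h2.
  by exists k, tO', tE'.
move=> hperp.
have bad : forall i, ~~ (0 < tE u 0 i) -> forall w, tE w 0 i = 0.
  move=> i hi.
  have hu : tE u 0 i = 0 by apply/eqP; rewrite eq_le hE // andbT leNgt.
  have he : forall e, Ef e -> tE e 0 i = 0.
    move=> e he0; have [ep [hep he]] := hperp e he0.
    move: hu; rewrite -he linearD mxE => /eqP; rewrite paddr_eq0; [|exact: hE|exact: hE].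
    by case/andP => /eqP.
  move=> w; have [s [hs hw]] := hsE w.
  rewrite (@coord_span _ _ _ (in_tuple s) _ hw) linear_sum summxE big1 // => j _.
  by rewrite linearZ mxE he ?mulr0 //; apply: hs; apply: mem_nth.
pose c : 'rV[R]_n := \row_i (if 0 < tE u 0 i then 1 else 0).
pose s i := if 0 < tE u 0 i then tE u 0 i else 1.
have h1 : forall i, 0 <= c 0 i by move=> i; rewrite mxE; case: ifP.
have h2 : forall i, 0 < s i by move=> i; rewrite /s; case: ifP => // _; exact: ltr01.
have h3 : forall w v, B w v = \sum_i c 0 i * (tE w 0 i * tO v 0 i).
  move=> w v; rewrite hB; apply: eq_bigr => i _; rewrite mxE.
  by case: ifP => h; rewrite ?mul1r // bad ?h // !mul0r.
have [k [tO' [tE' [emb hk hj]]]] := @reduce R V W n tE tO Om Ef B c s h1 h2 hO hE h3.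
exists k, tO', tE'; split => //; split => //.
apply/matrixP => a j; rewrite (ord1 a) [RHS]mxE.
have [i [ci ->]] := hj j.
move: ci; rewrite /c /s mxE; case: ifP => h; last by rewrite eqxx.
move=> _.
by rewrite divff // gt_eqF.
Qed.
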